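(* The map $\Phi$ from labelled red and white trees to formal fractions is injective: for every $n$, $\Phi:\mathrm{RW}(n)\to\mathcal{FF}(n)$ is injective.
   Context: $\mathrm{RW}(n)$: finite rooted trees (children unordered) whose nodes $z$ carry possibly empty label sets $L(z)\subseteq[n]$ partitioning $[n]$, every empty node having at least two children; a labelled node is white, an empty node is red iff all its children are white, white otherwise. $\mathcal{FF}(n)$: reduced formal fractions whose numerator and denominator are products of symbols $[S]$, $\emptyset\ne S\subseteq[n]$ (free abelian group on these symbols). For a node $z$ of $T$, let $S(z)$ be the union of the label sets of all nodes in the subtree rooted at $z$, and let $E(z)=1/[S(z)]$ if $z$ is white, $E(z)=[S(z)]$ if $z$ is red and not the root, $E(z)=1$ if $z$ is red and the root. Then $\Phi(T)=\prod_{z}E(z)$ over all nodes $z$ of $T$. *)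

(* Defs.v *)
From HB Require Import structures.
From mathcomp Require Import all_boot all_order all_algebra.
From Stdlib Require List.
From Stdlib Require Import Sorting.Permutation.
Set Implicit Arguments. Unset Strict Implicit. Unset Printing Implicit Defensive.
Import GRing.Theory.
Local Open Scope ring_scope.

(* Finite rooted trees with unordered children (represented by a list of
   children; unorderedness is handled by the isomorphism relation [tiso]). *)
Inductive rtree (n : nat) : Type :=
  RNode : {set 'I_n} -> seq (rtree n) -> rtree n.

Section Trees.
Variable n : nat.

Definition node_label (t : rtree n) : {set 'I_n} :=
  let: RNode L _ := t in L.

Fixpoint labels (t : rtree n) : seq {set 'I_n} :=
  let: RNode L cs := t in L :: flatten (map labels cs).

Fixpoint empty_nodes_ok (t : rtree n) : bool :=
  let: RNode L cs := t in
  ((L != set0) || (2 <= size cs)%N) && all empty_nodes_ok cs.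

Definition labels_partition (t : rtree n) : Prop :=
  forall i : 'I_n, count (fun L : {set 'I_n} => i \in L) (labels t) = 1%N.

Definition RW (t : rtree n) : Prop :=
  empty_nodes_ok t /\ labels_partition t.

(* colour: labelled nodes are white; an empty node is red iff all its
   children are white, white otherwise *)
Fixpoint is_white (t : rtree n) : bool :=
  let: RNode L cs := t in (L != set0) || ~~ all is_white cs.

Fixpoint subtree_set (t : rtree n) : {set 'I_n} :=
  let: RNode L cs := t in L :|: \bigcup_(S <- map subtree_set cs) S.

(* Formal fractions: elements of the free abelian group on the symbols [S],
   represented by their exponent vectors (S ↦ exponent of [S]); a reduced
   fraction num/den corresponds exactly to such an exponent vector. *)
Definition FF := {ffun {set 'I_n} -> int}.

Definition sym (S : {set 'I_n}) : FF := [ffun A => ((A == S) : nat)%:Z].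

Definition ff_mul (f g : FF) : FF := [ffun A => f A + g A].
Definition ff_one : FF := [ffun _ => 0].
Definition ff_inv (f : FF) : FF := [ffun A => - f A].

Fixpoint phi_aux (root : bool) (t : rtree n) : FF :=
  let: RNode L cs := t in
  let E := if is_white t then ff_inv (sym (subtree_set t))
           else if root then ff_one else sym (subtree_set t) in
  foldr (fun c acc => ff_mul (phi_aux false c) acc) E cs.

Definition Phi (t : rtree n) : FF := phi_aux true t.

End Trees.

Inductive tiso (n : nat) : rtree n -> rtree n -> Prop :=
  | TIso (L : {set 'I_n}) (cs cs1 cs2 : seq (rtree n)) :
      Permutation cs cs1 -> List.Forall2 (@tiso n) cs1 cs2 ->
      tiso (RNode L cs) (RNode L cs2).

(* Main.v *)
Require Import Defs.
From HB Require Import structures.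
From mathcomp Require Import all_boot all_order all_algebra.
From Stdlib Require List.
From mathcomp Require Import zify.
From Stdlib Require Import Sorting.Permutation.
Set Implicit Arguments. Unset Strict Implicit. Unset Printing Implicit Defensive.
Import GRing.Theory.

Section Proof.
Variable n : nat.
Implicit Types (t c : rtree n) (cs : seq (rtree n)) (A B C D : {set 'I_n}).

Lemma rtree_ind' (P : rtree n -> Prop) :
  (forall L cs, (forall c, List.In c cs -> P c) -> P (RNode L cs)) ->
  forall t, P t.
Proof.
move=> H; fix F 1 => -[L cs]; apply: H.
elim: cs => [|c0 cs' G] c /=; first by case.
by case=> [<-|h]; [exact: F | exact: G].
Qed.

Definition FS cs : {set 'I_n} := \bigcup_(S <- map (@subtree_set n) cs) S.

Lemma S_node L cs : subtree_set (RNode L cs) = L :|: FS cs.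
Proof. by []. Qed.

Lemma FS_nil : FS [::] = set0.
Proof. by rewrite /FS /= big_nil. Qed.

Lemma FS_cons c cs : FS (c :: cs) = subtree_set c :|: FS cs.
Proof. by rewrite /FS /= big_cons. Qed.

Lemma FS_In c cs : List.In c cs -> subtree_set c \subset FS cs.
Proof.
elim: cs => [|d cs IH] //= [<-|h]; rewrite FS_cons; first exact: subsetUl.
exact: subset_trans (IH h) (subsetUr _ _).
Qed.

Lemma FS_mem i cs : i \in FS cs -> exists2 c, List.In c cs & i \in subtree_set c.
Proof.
elim: cs => [|d cs IH]; first by rewrite FS_nil inE.
rewrite FS_cons in_setU => /orP[h|h]; first by exists d => //; left.
by case: (IH h) => c h1 h2; exists c => //; right.
Qed.

Definition cnt (i : 'I_n) t := count (fun L : {set 'I_n} => i \in L) (labels t).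
Definition fcnt i cs := sumn (map (cnt i) cs).

Lemma cnt_node i L cs : cnt i (RNode L cs) = (i \in L) + fcnt i cs.
Proof.
by rewrite /cnt /= count_flatten -map_comp.
Qed.

Lemma memS i t : (i \in subtree_set t) = (0 < cnt i t)%N.
Proof.
elim/rtree_ind': t => L cs IH.
rewrite S_node cnt_node in_setU addn_gt0 lt0b; congr (_ || _).
elim: cs IH => [|c cs IH2] H; first by rewrite FS_nil inE.
rewrite FS_cons in_setU /fcnt /= addn_gt0 H; last by left.
by congr (_ || _); apply: IH2 => d hd; apply: H; right.
Qed.

Lemma memFS i cs : (i \in FS cs) = (0 < fcnt i cs)%N.
Proof.
elim: cs => [|c cs IH]; first by rewrite FS_nil inE.
by rewrite FS_cons in_setU /fcnt /= addn_gt0 memS IH.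
Qed.

Definition good t := empty_nodes_ok t /\ forall i, (cnt i t <= 1)%N.
Definition gforest cs :=
  (forall c, List.In c cs -> empty_nodes_ok c) /\ forall i, (fcnt i cs <= 1)%N.

Lemma all_In (T : Type) (p : pred T) (s : seq T) x : all p s -> List.In x s -> p x.
Proof. by elim: s => [|y s IH] //= /andP[py ps] [<-|h] //; exact: IH. Qed.

Lemma good_forest L cs : good (RNode L cs) -> gforest cs.
Proof.
case=> /= /andP[_ ha] hc; split; first by move=> c; exact: all_In.
by move=> i; apply: leq_trans (hc i); rewrite cnt_node leq_addl.
Qed.

Lemma good_node L cs : good (RNode L cs) ->
  [disjoint L & FS cs] /\ (L == set0 -> 2 <= size cs)%N.
Proof.
case=> /= /andP[h1 _] hc; split; last by case: (L == set0) h1.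
rewrite -setI_eq0; apply/eqP/setP => i; rewrite inE in_set0.
apply/negP => /andP[h2 h3].
have := hc i; rewrite cnt_node h2.
move: h3; rewrite memFS add1n ltnS leqn0 => h.
by move/eqP=> e; rewrite e in h.
Qed.
Lemma gforest_cons c cs : gforest (c :: cs) ->
  [/\ good c, gforest cs & [disjoint subtree_set c & FS cs]].
Proof.
case=> h1 h2; have hc := h2; rewrite /fcnt /= in hc.
split.
- split; first by apply: h1; left.
  by move=> i; apply: leq_trans (hc i); rewrite leq_addr.
- split; first by move=> d hd; apply: h1; right.
  by move=> i; apply: leq_trans (hc i); rewrite leq_addl.
- rewrite -setI_eq0; apply/eqP/setP => i; rewrite inE in_set0.
  apply/negP => /andP[]; rewrite memS memFS => a b.
  have := hc i; rewrite /fcnt in b; move: a b; lia.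
Qed.

Lemma gforest_In c cs : gforest cs -> List.In c cs -> good c.
Proof.
elim: cs => [|d cs IH] //= /gforest_cons[gd gf _] [<-|h] //; exact: IH.
Qed.

Lemma good_child L cs c : good (RNode L cs) -> List.In c cs -> good c.
Proof. by move/good_forest; apply: gforest_In. Qed.

Lemma S_ne0 t : good t -> subtree_set t != set0.
Proof.
elim/rtree_ind': t => L cs IH g.
have [hd hs] := good_node g.
rewrite S_node; case: (boolP (L == set0)) => hL.
- have gcs : forall c, List.In c cs -> good c by move=> c; exact: good_child g.
  move: (hs hL) gcs IH; clear g hd hs; case: cs => [|c cs] //= _ gc IHc.
  have /set0Pn[i hi] := IHc c (or_introl erefl) (gc c (or_introl erefl)).
  by apply/set0Pn; exists i; rewrite FS_cons !inE hi orbT.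
- by case/set0Pn: hL => i hi; apply/set0Pn; exists i; rewrite inE hi.
Qed.

Fixpoint fam t : seq {set 'I_n} :=
  let: RNode L cs := t in subtree_set (RNode L cs) :: flatten (map fam cs).
Definition ffam cs := flatten (map fam cs).

Lemma fam_node L cs : fam (RNode L cs) = subtree_set (RNode L cs) :: ffam cs.
Proof. by []. Qed.

Lemma ffam_mem A cs : A \in ffam cs -> exists2 c, List.In c cs & A \in fam c.
Proof.
elim: cs => [|d cs IH] //=; rewrite /ffam /= mem_cat => /orP[h|h].
  by exists d => //; left.
by case: (IH h) => c h1 h2; exists c => //; right.
Qed.

Lemma ffam_In A c cs : List.In c cs -> A \in fam c -> A \in ffam cs.
Proof.
elim: cs => [|d cs IH] //= [<-|h] hA; rewrite /ffam /= mem_cat.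
  by rewrite hA.
by rewrite IH ?orbT.
Qed.

Lemma fam_sub t A : A \in fam t -> A \subset subtree_set t.
Proof.
elim/rtree_ind': t => L cs IH; rewrite fam_node inE => /orP[/eqP->//|].
case/ffam_mem => c hc hA; apply: subset_trans (IH c hc hA) _.
rewrite S_node; apply: subset_trans (FS_In hc) (subsetUr _ _).
Qed.

Lemma ffam_sub cs A : A \in ffam cs -> A \subset FS cs.
Proof. by case/ffam_mem => c hc hA; exact: subset_trans (fam_sub hA) (FS_In hc). Qed.

Lemma fam_ne0 t A : good t -> A \in fam t -> A != set0.
Proof.
elim/rtree_ind': t => L cs IH g; rewrite fam_node inE => /orP[/eqP->|].
  exact: S_ne0.
case/ffam_mem => c hc hA; exact: (IH c hc (good_child g hc) hA).
Qed.

Lemma disj_contra A B C : A \subset B -> A \subset C -> [disjoint B & C] ->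
  A != set0 -> False.
Proof.
move=> h1 h2 /disjoint_setI0 h3 /set0Pn[i hi].
have : i \in B :&: C by rewrite inE (subsetP h1 _ hi) (subsetP h2 _ hi).
by rewrite h3 inE.
Qed.

Lemma disj_mem (i : 'I_n) B C : i \in B -> i \in C -> [disjoint B & C] -> False.
Proof.
move=> h1 h2 /disjoint_setI0 h3.
have : i \in B :&: C by rewrite inE h1 h2.
by rewrite h3 inE.
Qed.

Lemma neq_witness A B i : i \in B -> i \notin A -> A != B.
Proof. by move=> h1 h2; apply/eqP => e; rewrite e h1 in h2. Qed.

Lemma strict L cs A : good (RNode L cs) -> A \in ffam cs ->
  A != subtree_set (RNode L cs).
Proof.
move=> g hA; have [hd hs] := good_node g; have hsub := ffam_sub hA.
rewrite S_node; case: (boolP (L == set0)) => hL.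
- move: (hs hL) (good_forest g) hA hsub; clear g hd hs; case: cs => [|c [|c' cs]] // _ gf.
  have [gc gf' dj] := gforest_cons gf.
  have [gc' _ _] := gforest_cons gf'.
  rewrite /ffam /= mem_cat => /orP[hA|hA] _.
  + have /set0Pn[i hi] := S_ne0 gc'.
    apply: (@neq_witness _ _ i); first by rewrite !(FS_cons, inE) hi ?orbT.
    apply/negP => hiA; have hi' := subsetP (fam_sub hA) i hiA.
    by apply: (disj_mem hi' _ dj); rewrite FS_cons inE hi.
  + have /set0Pn[i hi] := S_ne0 gc.
    apply: (@neq_witness _ _ i); first by rewrite !(FS_cons, inE) hi ?orbT.
    have hs' : A \subset FS (c' :: cs) by apply: ffam_sub.
    apply/negP => hiA; have hi' := subsetP hs' i hiA.
    exact: (disj_mem hi hi' dj).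
- case/set0Pn: hL => i hi.
  apply: (@neq_witness _ _ i); first by rewrite inE hi.
  apply/negP => hiA; have hi' := subsetP hsub i hiA.
  exact: (disj_mem hi hi' hd).
Qed.

Lemma sib_eq cs c c' : gforest cs -> List.In c cs -> List.In c' cs ->
  ~~ [disjoint subtree_set c & subtree_set c'] -> c = c'.
Proof.
elim: cs => [|d cs IH] //= /gforest_cons[gd gf dj] h h' hnd.
case: h => [e|h]; case: h' => [e'|h'].
- by rewrite -e -e'.
- by move: hnd; rewrite -e (disjointWr (FS_In h') dj).
- by move: hnd; rewrite -e' disjoint_sym (disjointWr (FS_In h) dj).
- exact: IH.
Qed.
Local Open Scope ring_scope.

Lemma phi_node b L cs : phi_aux b (RNode L cs) =
  foldr (fun c acc => ff_mul (phi_aux false c) acc)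
    (if is_white (RNode L cs) then ff_inv (sym (subtree_set (RNode L cs)))
     else if b then @ff_one n else sym (subtree_set (RNode L cs))) cs.
Proof. by []. Qed.

Lemma foldr_app (E : FF n) cs A :
  (foldr (fun c acc => ff_mul (phi_aux false c) acc) E cs) A =
  E A + \sum_(c <- cs) phi_aux false c A.
Proof.
elim: cs => [|c cs IH] /=; first by rewrite big_nil addr0.
by rewrite ffunE IH big_cons addrCA.
Qed.

Lemma forest_claim cs : gforest cs ->
  (forall c, List.In c cs -> forall A, (phi_aux false c A != 0) = (A \in fam c)) ->
  forall A, (\sum_(c <- cs) phi_aux false c A != 0) = (A \in ffam cs).
Proof.
elim: cs => [|c cs IH] gf H A; first by rewrite big_nil.
have [gc gf' dj] := gforest_cons gf.
rewrite big_cons /ffam /= mem_cat -/(ffam cs).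
have IH' := IH gf' (fun d hd => H d (or_intror hd)) A.
case: (boolP (A \in fam c)) => hA /=.
- have hn : A \notin ffam cs.
    apply/negP => hA'.
    exact: (disj_contra (fam_sub hA) (ffam_sub hA') dj (fam_ne0 gc hA)).
  rewrite (negbTE hn) in IH'; move/negbFE/eqP: IH' => ->.
  by rewrite addr0 H //; left.
- move: (H c (or_introl erefl) A); rewrite (negbTE hA) => /negbFE/eqP ->.
  by rewrite add0r.
Qed.

Lemma tree_claim t : good t -> forall b A,
  (phi_aux b t A != 0) =
  (A \in fam t) && ~~ [&& b, ~~ is_white t & A == subtree_set t].
Proof.
elim/rtree_ind': t => L cs IH g b A.
have gf := good_forest g.
have FC := forest_claim gf (fun c hc B => etrans (IH c hc (good_child g hc) false B) (andbT _)) A.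
rewrite phi_node foldr_app fam_node inE.
set St := subtree_set (RNode L cs).
case: (eqVneq A St) => [eA|nA].
- have hn : A \notin ffam cs by apply/negP => h; move: (strict g h); rewrite eA eqxx.
  rewrite (negbTE hn) in FC; move/negbFE/eqP: FC => ->; rewrite addr0 eA.
  by case: (is_white _); case: b; rewrite ?ffunE eqxx.
- have -> : (if is_white (RNode L cs) then ff_inv (sym St)
     else if b then @ff_one n else sym St) A = 0.
    case: (is_white _); case: b; rewrite /ff_inv /sym /ff_one ?ffunE ?ffunE //= (negbTE nA) //= ?oppr0.
  by rewrite add0r FC /= !andbF andbT.
Qed.
Definition famEq t1 t2 := forall A, (A \in fam t1) = (A \in fam t2).

Lemma S_in_fam t : subtree_set t \in fam t.
Proof. by case: t => L cs; rewrite fam_node inE eqxx. Qed.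

Lemma rootS_eq t1 t2 : famEq t1 t2 -> subtree_set t1 = subtree_set t2.
Proof.
move=> E; apply/eqP; rewrite eqEsubset; apply/andP; split; apply: fam_sub.
  by rewrite -E S_in_fam.
by rewrite E S_in_fam.
Qed.

Lemma transfer L1 cs1 L2 cs2 c1 c2 A :
  good (RNode L1 cs1) -> good (RNode L2 cs2) -> famEq (RNode L1 cs1) (RNode L2 cs2) ->
  List.In c1 cs1 -> List.In c2 cs2 -> subtree_set c1 = subtree_set c2 ->
  A \in fam c1 -> A \in fam c2.
Proof.
move=> g1 g2 E h1 h2 eS hA.
have hA1 := ffam_In h1 hA.
have : A \in fam (RNode L2 cs2) by rewrite -E fam_node inE hA1 orbT.
rewrite fam_node inE => /orP[/eqP eA|hA2].
  by move: (strict g1 hA1); rewrite (rootS_eq E) eA eqxx.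
case/ffam_mem: hA2 => c2' h2' hA'.
have -> // : c2 = c2'.
apply: (sib_eq (good_forest g2) h2 h2'); apply/negP => dj.
apply: (disj_contra _ (fam_sub hA') dj (fam_ne0 (good_child g1 h1) hA)).
by rewrite -eS; exact: fam_sub.
Qed.

Lemma child_match L1 cs1 L2 cs2 c1 :
  good (RNode L1 cs1) -> good (RNode L2 cs2) -> famEq (RNode L1 cs1) (RNode L2 cs2) ->
  List.In c1 cs1 ->
  exists c2, [/\ List.In c2 cs2, subtree_set c1 = subtree_set c2 & famEq c1 c2].
Proof.
move=> g1 g2 E h1.
have RS := rootS_eq E.
have := S_in_fam c1 => hS1.
have hS1' := ffam_In h1 hS1.
have : subtree_set c1 \in fam (RNode L2 cs2) by rewrite -E fam_node inE hS1' orbT.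
rewrite fam_node inE => /orP[/eqP e|].
  by move: (strict g1 hS1'); rewrite RS e eqxx.
case/ffam_mem => c2 h2 hc2.
have hS2' := ffam_In h2 (S_in_fam c2).
have : subtree_set c2 \in fam (RNode L1 cs1) by rewrite E fam_node inE hS2' orbT.
rewrite fam_node inE => /orP[/eqP e|].
  by move: (strict g2 hS2'); rewrite -RS e eqxx.
case/ffam_mem => c1' h1' hc1'.
have sub12 := fam_sub hc2; have sub21 := fam_sub hc1'.
have ec : c1 = c1'.
  apply: (sib_eq (good_forest g1) h1 h1'); apply/negP => dj.
  apply: (disj_contra (subxx _) (subset_trans sub12 sub21) dj).
  exact: S_ne0 (good_child g1 h1).
rewrite -ec in sub21.
have eS : subtree_set c1 = subtree_set c2 by apply/eqP; rewrite eqEsubset sub12 sub21.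
exists c2; split => // A; apply/idP/idP.
  exact: transfer g1 g2 E h1 h2 eS.
have E' : famEq (RNode L2 cs2) (RNode L1 cs1) by move=> B; rewrite E.
exact: transfer g2 g1 E' h2 h1 (esym eS).
Qed.

Lemma mapIn (K : eqType) (f : rtree n -> K) cs k :
  k \in map f cs -> exists2 c, List.In c cs & f c = k.
Proof.
elim: cs => [|c cs IH] //=; rewrite inE => /orP[/eqP->|h]; first by exists c => //; left.
by case: (IH h) => d h1 h2; exists d => //; right.
Qed.

Lemma In_map (K : eqType) (f : rtree n -> K) cs c : List.In c cs -> f c \in map f cs.
Proof.
elim: cs => [|d cs IH] //= [<-|h]; rewrite inE; first by rewrite eqxx.
by rewrite IH ?orbT.
Qed.

Lemma uniq_S cs : gforest cs -> uniq (map (@subtree_set n) cs).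
Proof.
elim: cs => [|c cs IH] //= /gforest_cons[gc gf dj]; rewrite IH // andbT.
apply/negP => /mapIn[c' h e].
apply: (disj_contra (subxx _) _ dj (S_ne0 gc)).
by rewrite -e; exact: FS_In.
Qed.

Lemma perm_match (T : Type) (K : eqType) (k : T -> K) (R : T -> T -> Prop)
  (s2 s1 : seq T) :
  uniq (map k s1) -> perm_eq (map k s1) (map k s2) ->
  (forall x y, List.In x s1 -> List.In y s2 -> k x = k y -> R x y) ->
  exists s, Permutation s1 s /\ List.Forall2 R s s2.
Proof.
elim: s2 s1 => [|y s2 IH] s1 hu hp hR.
  move: hp; case: s1 {hu hR} => [|x s1] hp; first by exists [::].
  by move: (perm_size hp).
have : k y \in map k s1 by rewrite (perm_mem hp) inE eqxx.
have mapIn' : forall s z, z \in map k s -> exists2 x, List.In x s & k x = z.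
  move=> s z; elim: s => [|a s IHs] //=; rewrite inE => /orP[/eqP->|h].
    by exists a => //; left.
  by case: (IHs h) => d h1 h2; exists d => //; right.
case/mapIn' => x hx ex.
have [pre [post ecs]] : exists pre post, s1 = pre ++ x :: post.
  elim: (s1) hx => [|a s IHs] //= [<-|h]; first by exists [::], s.
  by case: (IHs h) => pre [post ->]; exists (a :: pre), post.
subst s1.
have P : perm_eq (map k (pre ++ x :: post)) (k x :: map k (pre ++ post)).
  by rewrite !map_cat /= -cat1s perm_catCA.
have hu' : uniq (map k (pre ++ post)).
  by move: hu; rewrite (perm_uniq P) /= => /andP[].
have hp' : perm_eq (map k (pre ++ post)) (map k s2).
  have hp2 : perm_eq (map k (pre ++ x :: post)) (k y :: map k s2) := hp.
  rewrite perm_sym in P; have P2 := seq.perm_trans P hp2; rewrite -ex in P2.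
  by rewrite -(perm_cons (k x)).
have [s [Ps Fs]] : exists s, Permutation (pre ++ post) s /\ List.Forall2 R s s2.
  apply: IH => // a b ha hb e; apply: hR e.
    by apply: List.in_or_app; case: (List.in_app_or _ _ _ ha) => h; [left|right; right].
  by right.
exists (x :: s); split; last first.
  constructor => //; apply: hR => //; last by left.
apply: Permutation_trans (Permutation_sym (Permutation_middle _ _ _)) _.
exact: perm_skip.
Qed.
Lemma recon t1 : good t1 -> forall t2, good t2 -> famEq t1 t2 -> tiso t1 t2.
Proof.
elim/rtree_ind': t1 => L1 cs1 IH g1 [L2 cs2] g2 E.
have RS := rootS_eq E.
have E' : famEq (RNode L2 cs2) (RNode L1 cs1) by move=> B; rewrite E.
have M12 := child_match g1 g2 E; have M21 := child_match g2 g1 E'.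
have gf1 := good_forest g1; have gf2 := good_forest g2.
have FSe : FS cs1 = FS cs2.
  apply/setP => i; apply/idP/idP => /FS_mem[c hc hi].
    case: (M12 c hc) => c2 [h2 eS _]; apply: (subsetP (FS_In h2)); by rewrite -eS.
  case: (M21 c hc) => c2 [h2 eS _]; apply: (subsetP (FS_In h2)); by rewrite -eS.
have Le : L2 = L1.
  have [d1 _] := good_node g1; have [d2 _] := good_node g2.
  have H1 : L1 = subtree_set (RNode L1 cs1) :\: FS cs1.
    by rewrite S_node setDUl setDv setU0 (setDidPl d1).
  have H2 : L2 = subtree_set (RNode L2 cs2) :\: FS cs2.
    by rewrite S_node setDUl setDv setU0 (setDidPl d2).
  by rewrite H1 H2 RS FSe.
have [s [Ps Fs]] : exists s, Permutation cs1 s /\ List.Forall2 (@tiso n) s cs2.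
  apply: (perm_match (k := @subtree_set n)).
  - exact: uniq_S gf1.
  - apply: uniq_perm; [exact: uniq_S gf1 | exact: uniq_S gf2 |] => A.
    apply/idP/idP => /mapIn[c hc <-].
      by case: (M12 c hc) => c2 [h2 eS _]; rewrite eS; apply: In_map.
    by case: (M21 c hc) => c2 [h2 eS _]; rewrite eS; apply: In_map.
  - move=> x y hx hy e.
    case: (M12 x hx) => c2 [h2 eS fe].
    have ey : y = c2.
      apply: (sib_eq gf2 hy h2); apply/negP => dj.
      apply: (disj_contra (subxx _) _ dj (S_ne0 (good_child g2 hy))).
      by rewrite -eS e.
    rewrite ey; exact: (IH x hx (good_child g1 hx) c2 (good_child g2 h2) fe).
rewrite Le; econstructor; eassumption.
Qed.

Lemma RW_good t : RW t -> good t.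
Proof. by case=> h1 h2; split => // i; rewrite /cnt h2. Qed.

Lemma RW_S t : RW t -> subtree_set t = setT.
Proof. by case=> _ h; apply/setP => i; rewrite inE memS /cnt h. Qed.

Lemma fam_phi t : RW t -> forall A, (A \in fam t) = (A == setT) || (Phi t A != 0).
Proof.
move=> r A; rewrite /Phi (tree_claim (RW_good r)) (RW_S r).
case: (eqVneq A setT) => [->|nA] /=; last by rewrite andbF andbT.
by rewrite -(RW_S r) S_in_fam.
Qed.

End Proof.

Theorem mainTheorem9 (n : nat) (T1 T2 : rtree n) :
  RW T1 -> RW T2 -> Phi T1 = Phi T2 -> tiso T1 T2.
Proof.
move=> r1 r2 e; apply: recon (RW_good r1) _ (RW_good r2) _ => A.
by rewrite (fam_phi r1) (fam_phi r2) e.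
Qed.
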